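(* Assume the setting of the context, with $\lambda_d=C-\bar\lambda$, $\rho=\bar\lambda/C\in(0,1)$, and buffer size $K=\dot{\mathbf K}=b\bar\lambda\left[\frac{\alpha}{\beta}\left(\frac{\rho}{1-\rho}-1\right)-1\right]\ge 0$, and let $\mathbf P_d=1-\rho$. Let $\dot{\mathbf D}_q$ be the waiting time of admitted fluid as defined in the context, and let $\dot{\mathbf D}=aG+\dot{\mathbf D}_q$ where $a>0$ is a constant and $G$ is independent of $\dot{\mathbf D}_q$ with $\Pr\{G=g\}=\mathbf P_d^{\,g}(1-\mathbf P_d)$, $g=0,1,2,\dots$. Then $$E[\dot{\mathbf D}]=a\frac{1-\rho}{\rho}+E[\dot{\mathbf D}_q],\qquad \mathrm{var}[\dot{\mathbf D}]=a^2\frac{1-\rho}{\rho^2}+\mathrm{var}[\dot{\mathbf D}_q],$$ where $$E[\dot{\mathbf D}_q]=b\cdot\frac{\left[\left(2\frac{\alpha}{\beta}+1\right)\rho-\left(1+\frac{\alpha}{\beta}\right)\right]\left[\left(2-\frac{\beta}{\alpha}\right)\rho+\left(\frac{\beta}{\alpha}-1\right)\right]}{2\rho(1-\rho)},$$ $$E[\dot{\mathbf D}_q^2]=b^2\cdot\frac{\left[(2\rho-1)\frac{\alpha}{\beta}-(1-\rho)\right]^2\left[(1-\rho)\frac{2\beta}{\alpha}+2\rho-1\right]}{3(1-\rho)^2}.$$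
   Context: Fluid queue model: $\alpha,\beta>0$, $b=1/(\alpha+\beta)$, $\hat\lambda>0$, $\bar\lambda=\hat\lambda\beta/(\alpha+\beta)$, $C>\bar\lambda$, $\lambda_d\ge0$. A buffer of capacity $K$ is drained at rate $C$ whenever nonempty. A two-state continuous-time Markov chain $S\in\{\mathrm{on},\mathrm{off}\}$ leaves on at rate $\alpha$ and off at rate $\beta$; fluid arrives at rate $\hat\lambda+\lambda_d$ when on and $\lambda_d$ when off. The content $x\in[0,K]$ increases at rate (arrival rate $-C$) when positive and $x<K$, decreases at rate $C-$(arrival rate) when positive and $x>0$; at $x=K$ excess fluid is lost. In stationarity let $p_1(X)$, $p_0(X)$ be the densities of $x$ on $(0,K)$ jointly with $S=\mathrm{on}$, $S=\mathrm{off}$, $\Pr\{x=0\}$ the atom at empty (off state) and $\Pr\{x=K\}$ the atom at full (on state); let $\Delta=(\hat\lambda+\lambda_d-C)\Pr\{x=K\}$ and $R=\bar\lambda+\lambda_d-\Delta$ (rate of admitted fluid). The waiting time $\mathbf D_q$ of admitted fluid (FIFO, waits $X/C$ when entering at content $X$) is the random variable with an atom $\lambda_d\Pr\{x=0\}/R$ at $0$, density $\big[(\hat\lambda+\lambda_d)p_1(tC)+\lambda_d p_0(tC)\big]C/R$ for $t\in(0,K/C)$, and an atom $C\Pr\{x=K\}/R$ at $K/C$. $\dot{\mathbf D}_q$ denotes $\mathbf D_q$ under $\lambda_d=C-\bar\lambda$ and $K=\dot{\mathbf K}$. *)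

(* Defs.v *)
From Stdlib Require Import Reals.
Open Scope R_scope.

Definition integral_is (f : R -> R) (a b v : R) : Prop :=
  exists pr : Riemann_integrable f a b, RiemannInt pr = v.

Definition lam_bar (al be lh : R) : R := lh * be / (al + be).

(** Stationary distribution of the buffer content, with densities p1 (on),
    p0 (off) on [0,K], atom P0 at x=0 (off) and atom PK at x=K (on),
    characterised by the stationary Kolmogorov forward equations with their
    boundary (flux) conditions and normalisation.  Drifts:
    r1 = \hat\lambda + \lambda_d - C  (> 0 in the on state),
    r0 = \lambda_d - C               (< 0 in the off state). *)
Definition is_stationary (al be lh ld C K : R) (p1 p0 : R -> R) (P0 PK : R)
  : Prop :=
  let r1 := lh + ld - C in
  let r0 := ld - C in
  0 <= P0 /\ 0 <= PK /\
  (forall x, 0 <= x <= K -> 0 <= p1 x /\ 0 <= p0 x) /\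
  (forall x, 0 <= x <= K ->
     derivable_pt_lim p1 x ((- al * p1 x + be * p0 x) / r1) /\
     derivable_pt_lim p0 x ((al * p1 x - be * p0 x) / r0)) /\
  r1 * p1 0 = be * P0 /\
  - r0 * p0 0 = be * P0 /\
  r1 * p1 K = al * PK /\
  - r0 * p0 K = al * PK /\
  (exists I, integral_is (fun x => p1 x + p0 x) 0 K I /\ P0 + PK + I = 1).

(** rate of admitted fluid R = \bar\lambda + \lambda_d - Delta,
    Delta = (\hat\lambda + \lambda_d - C) Pr{x=K} *)
Definition R_adm (al be lh ld C PK : R) : R :=
  lam_bar al be lh + ld - (lh + ld - C) * PK.

(** [Dq_expect ... h v]:  E[h(D_q)] = v, where D_q has an atom
    ld*P0/R at 0, density ((lh+ld) p1(tC) + ld p0(tC)) C/R on (0,K/C)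
    and an atom C*PK/R at K/C. *)
Definition Dq_expect (al be lh ld C K : R) (p1 p0 : R -> R) (P0 PK : R)
  (h : R -> R) (v : R) : Prop :=
  let Ra := R_adm al be lh ld C PK in
  exists I,
    integral_is
      (fun t => h t * (((lh + ld) * p1 (t * C) + ld * p0 (t * C)) * C / Ra))
      0 (K / C) I /\
    v = ld * P0 / Ra * h 0 + I + C * PK / Ra * h (K / C).

Definition geom_pmf (Pd : R) (g : nat) : R := Pd ^ g * (1 - Pd).

(** [D_expect ... h v]:  E[h(a G + D_q)] = v with G independent of D_q,
    i.e. v = sum_g Pr{G=g} E[h(a g + D_q)]. *)
Definition D_expect (al be lh ld C K : R) (p1 p0 : R -> R) (P0 PK : R)
  (a Pd : R) (h : R -> R) (v : R) : Prop :=
  exists vals : nat -> R,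
    (forall g : nat,
        Dq_expect al be lh ld C K p1 p0 P0 PK (fun t => h (a * INR g + t)) (vals g)) /\
    infinite_sum (fun g => geom_pmf Pd g * vals g) v.

(* Main.v *)
Require Import Defs.
From Stdlib Require Import Reals Lra Lia Field.
From Coquelicot Require Import Coquelicot.
Open Scope R_scope.

Lemma alg (al be C rho c : R) : 0 < al -> 0 < be -> 0 < C -> 0 < rho -> rho < 1 ->
  let lb := rho * C in let lh := lb*(al+be)/be in let b := 1/(al+be) in let ld := C - lb in
  let K := b * lb * (al / be * (rho / (1 - rho) - 1) - 1) in
  let r1 := lh + ld - C in
  let P0 := r1*c/be in let PK := r1*c/al in
  let Ra := lb + ld - r1*PK in
  let D := ((lh+ld)*c + ld*(r1*c/lb))*C/Ra in
  let T := K/C in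
  0 <= K -> P0 + PK + K*(c + r1*c/lb) = 1 ->
  ld*P0/Ra + D*T + C*PK/Ra = 1 /\
  D*(T^2/2) + C*PK/Ra*T = b * (((2 * (al / be) + 1) * rho - (1 + al / be))
                  * ((2 - be / al) * rho + (be / al - 1)))
             / (2 * rho * (1 - rho)) /\
  D*(T^3/3) + C*PK/Ra*T^2 = b ^ 2 * (((2 * rho - 1) * (al / be) - (1 - rho)) ^ 2
                       * ((1 - rho) * (2 * be / al) + 2 * rho - 1))
              / (3 * (1 - rho) ^ 2).
Proof.
cbv zeta. intros H1 H2 H3 H4 H5 HK Hn.
set (k := al*(2*rho-1) - be*(1-rho)).
assert (Hk : 0 <= k).
{ assert (E : 1 / (al + be) * (rho * C) * (al / be * (rho / (1 - rho) - 1) - 1)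
          = rho * C * k / ((al+be)*be*(1-rho))) by (unfold k; field; lra).
  rewrite E in HK.
  assert (0 < rho * C / ((al+be)*be*(1-rho))).
  { apply Rdiv_lt_0_compat. nra. apply Rmult_lt_0_compat; [nra|lra]. }
  replace (rho * C * k / ((al + be) * be * (1 - rho))) with (k * (rho * C / ((al+be)*be*(1-rho)))) in HK by (field; lra).
  nra. }
set (m := (al+be)*(1-rho) + k).
assert (Hm : 0 < m) by (unfold m; nra).
assert (HX : 0 < rho*C*m/(be^2*(1-rho))).
{ apply Rdiv_lt_0_compat. repeat apply Rmult_lt_0_compat; lra. apply Rmult_lt_0_compat; [apply pow_lt; lra | lra]. }
assert (E : (rho * C * (al + be) / be + (C - rho * C) - C) * c / be + (rho * C * (al + be) / be + (C - rho * C) - C) * c / al +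
 1 / (al + be) * (rho * C) * (al / be * (rho / (1 - rho) - 1) - 1) *
 (c + (rho * C * (al + be) / be + (C - rho * C) - C) * c / (rho * C)) = (rho*C*m/(be^2*(1-rho)))*c).
{ unfold m, k. field. lra. }
assert (Hc : c = be^2*(1-rho)/(rho*C*m)).
{ apply (Rmult_eq_reg_l (rho*C*m/(be^2*(1-rho)))). 2: lra.
  rewrite <- E. rewrite Hn. field. split; lra. }
assert (HR0 : 0 < (1-rho)*(al*(1-rho)+be)) by (apply Rmult_lt_0_compat; nra).
assert (HR : 0 < (1-rho)*(al*(1-rho)+be) + k) by lra.
subst c. unfold m in *. clear Hn HK.
unfold k in *. split; [|split]; field; repeat split; try lra. all: match goal with |- ?e <> 0 => replace e with (rho*(C*C)*al*((1-rho)*(al*(1-rho)+be) + (al*(2*rho-1)-be*(1-rho)))) by ring end; apply Rgt_not_eq; repeat apply Rmult_lt_0_compat; lra.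
Qed.

Lemma ex_series_sq (x : R) : 0 < x < 1 -> ex_series (fun n => INR (S n) ^ 2 * x ^ n).
Proof.
  intros Hx.
  apply ex_series_Rabs.
  apply ex_series_DAlembert with x. lra.
  - intros n. apply Rmult_integral_contrapositive_currified.
    apply pow_nonzero. apply not_0_INR. discriminate.
    apply pow_nonzero. lra.
  - apply is_lim_seq_ext with (fun n => x * ((1 + / INR (S n)) * (1 + / INR (S n)))).
    + intros n. rewrite Rabs_pos_eq.
      * rewrite !S_INR. simpl. field. split. apply pow_nonzero. lra.
        pose proof (pos_INR n). lra.
      * apply Rmult_le_pos; [apply Rmult_le_pos; [apply pow_le, pos_INR | apply pow_le; lra] | left; apply Rinv_0_lt_compat; apply Rmult_lt_0_compat; [apply pow_lt, lt_0_INR; lia | apply pow_lt; lra]].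
    + assert (H1 : is_lim_seq (fun n => 1 + / INR (S n)) (1 + 0)).
      { apply is_lim_seq_plus'. apply is_lim_seq_const.
        apply (is_lim_seq_incr_1 (fun n => / INR n)).
        replace (Finite 0) with (Rbar_inv p_infty) by reflexivity.
        apply is_lim_seq_inv. apply is_lim_seq_INR. discriminate. }
      assert (H2 : is_lim_seq (fun n => x * ((1 + / INR (S n)) * (1 + / INR (S n)))) (x * ((1 + 0) * (1 + 0)))).
      { apply is_lim_seq_mult'. apply is_lim_seq_const. apply is_lim_seq_mult'; exact H1. }
      replace (x * ((1 + 0) * (1 + 0))) with x in H2 by ring. exact H2.
Qed.

Lemma geom_moments (x u v w : R) : 0 < x < 1 ->
  infinite_sum (fun g => x ^ g * (1 - x) * (u + v * INR g + w * INR g ^ 2))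
    (u + v * (x / (1 - x)) + w * (x * (1 + x) / (1 - x) ^ 2)).
Proof.
  intros Hx. apply is_series_Reals.
  pose proof (ex_series_sq x Hx) as Hsq.
  assert (HA : is_series (fun n => x ^ n) (/ (1 - x))).
  { apply is_series_geom. rewrite Rabs_pos_eq; lra. }
  assert (HB : ex_series (fun n => INR n * x ^ n)).
  { apply (ex_series_le (K:=R_AbsRing) (V:=R_CompleteNormedModule)) with (2 := Hsq). intros n. unfold norm; simpl; unfold abs; simpl.
    rewrite Rabs_pos_eq. 2: { apply Rmult_le_pos. apply pos_INR. apply pow_le; lra. }
    apply Rmult_le_compat_r. apply pow_le; lra.
    pose proof (pos_INR n). destruct n; [simpl; lra | nra]. }
  assert (HC : ex_series (fun n => INR n ^ 2 * x ^ n)).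
  { apply (ex_series_le (K:=R_AbsRing) (V:=R_CompleteNormedModule)) with (2 := Hsq). intros n. unfold norm; simpl; unfold abs; simpl.
    rewrite Rabs_pos_eq. 2: { apply Rmult_le_pos. pose proof (pos_INR n); nra. apply pow_le; lra. }
    apply Rmult_le_compat_r. apply pow_le; lra.
    pose proof (pos_INR n). destruct n; [simpl; lra | nra]. }
  destruct HB as [B HB]. destruct HC as [C HC].
  assert (EB : B = x * (B + / (1 - x))).
  { assert (H1 : is_series (fun n => INR (S n) * x ^ (S n)) B).
    { apply (is_series_incr_1 (fun n => INR n * x ^ n)). simpl.
      replace (plus B (0 * 1)) with B. exact HB. unfold plus; simpl; lra. }
    assert (H2 : is_series (fun n => INR (S n) * x ^ (S n)) (scal x (plus B (/ (1 - x))))).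
    { apply is_series_ext with (fun n => scal x (plus (INR n * x ^ n) (x ^ n))).
      intros n. change (x * (INR n * x ^ n + x ^ n) = INR (S n) * x ^ S n). rewrite S_INR. simpl. ring.
      apply (is_series_scal (K:=R_AbsRing) (V:=R_NormedModule) x). apply (is_series_plus (K:=R_AbsRing) (V:=R_NormedModule)); assumption. }
    transitivity (Series (fun n => INR (S n) * x ^ (S n))). symmetry; exact (is_series_unique _ _ H1). exact (is_series_unique _ _ H2). }
  assert (EC : C = x * (C + 2 * B + / (1 - x))).
  { assert (H1 : is_series (fun n => INR (S n) ^ 2 * x ^ (S n)) C).
    { apply (is_series_incr_1 (fun n => INR n ^ 2 * x ^ n)). simpl.
      replace (plus C (0 * (0 * 1) * 1)) with C. exact HC. unfold plus; simpl; lra. }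
    assert (H2 : is_series (fun n => INR (S n) ^ 2 * x ^ (S n)) (scal x (plus (plus C (scal 2 B)) (/ (1 - x))))).
    { apply is_series_ext with (fun n => scal x (plus (plus (INR n ^ 2 * x ^ n) (scal 2 (INR n * x ^ n))) (x ^ n))).
      intros n. change (x * ((INR n ^ 2 * x ^ n + 2 * (INR n * x ^ n)) + x ^ n) = INR (S n) ^ 2 * x ^ S n). rewrite S_INR. simpl. ring.
      apply (is_series_scal (K:=R_AbsRing) (V:=R_NormedModule) x). apply (is_series_plus (K:=R_AbsRing) (V:=R_NormedModule)). apply (is_series_plus (K:=R_AbsRing) (V:=R_NormedModule)). assumption.
      apply (is_series_scal (K:=R_AbsRing) (V:=R_NormedModule)). assumption. assumption. }
    transitivity (Series (fun n => INR (S n) ^ 2 * x ^ (S n))). symmetry; exact (is_series_unique _ _ H1). exact (is_series_unique _ _ H2). }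
  assert (E1 : B * (1 - x) = x * / (1 - x)) by lra.
  assert (HB' : B = x / (1 - x) ^ 2).
  { apply (Rmult_eq_reg_r (1 - x)). 2: lra. rewrite E1. field. lra. }
  assert (E2 : C * (1 - x) = x * (2 * B + / (1 - x))) by lra.
  assert (HC' : C = x * (1 + x) / (1 - x) ^ 3).
  { apply (Rmult_eq_reg_r (1 - x)). 2: lra. rewrite E2, HB'. field. lra. }
  assert (H := (is_series_plus (K:=R_AbsRing) (V:=R_NormedModule) _ _ _ _
     (is_series_plus (K:=R_AbsRing) (V:=R_NormedModule) _ _ _ _
       (is_series_scal (K:=R_AbsRing) (V:=R_NormedModule) (u * (1 - x)) _ _ HA)
       (is_series_scal (K:=R_AbsRing) (V:=R_NormedModule) (v * (1 - x)) _ _ HB))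
     (is_series_scal (K:=R_AbsRing) (V:=R_NormedModule) (w * (1 - x)) _ _ HC))).
  assert (H' : is_series (fun n => x ^ n * (1 - x) * (u + v * INR n + w * INR n ^ 2))
    (plus (plus (scal (u * (1 - x)) (/ (1 - x))) (scal (v * (1 - x)) B)) (scal (w * (1 - x)) C))).
  { eapply is_series_ext; [|exact H]. intros n. change (u * (1 - x) * x ^ n + v * (1 - x) * (INR n * x ^ n) + w * (1 - x) * (INR n ^ 2 * x ^ n)
       = x ^ n * (1 - x) * (u + v * INR n + w * INR n ^ 2)). ring. }
  replace (u + v * (x / (1 - x)) + w * (x * (1 + x) / (1 - x) ^ 2)) with
    (plus (plus (scal (u * (1 - x)) (/ (1 - x))) (scal (v * (1 - x)) B)) (scal (w * (1 - x)) C)).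
  exact H'.
  change (u * (1 - x) * / (1 - x) + v * (1 - x) * B + w * (1 - x) * C = u + v * (x / (1 - x)) + w * (x * (1 + x) / (1 - x) ^ 2)).
  rewrite HB', HC'. field. lra.
Qed.

Lemma integral_is_unique f a b v w : integral_is f a b v -> integral_is f a b w -> v = w.
Proof. intros [p1 <-] [p2 <-]. apply RiemannInt_P5. Qed.

Lemma integral_poly (f : R -> R) (T D u v w : R) : 0 <= T ->
  (forall t, 0 <= t <= T -> f t = (u + v * t + w * t ^ 2) * D) ->
  integral_is f 0 T (D * (u * T + v * (T ^ 2 / 2) + w * (T ^ 3 / 3))).
Proof.
  intros HT Hf.
  set (F := fun t => D * (u * t + v * (t ^ 2 / 2) + w * (t ^ 3 / 3))).
  assert (H : is_RInt (fun t => (u + v * t + w * t ^ 2) * D) 0 T (minus (F T) (F 0))).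
  { apply (is_RInt_derive (V := R_CompleteNormedModule) F).
    - intros x _. unfold F. auto_derive. auto. field.
    - intros x _. apply (ex_derive_continuous (K:=R_AbsRing) (V:=R_NormedModule)). auto_derive. auto. }
  assert (H' : is_RInt f 0 T (minus (F T) (F 0))).
  { apply is_RInt_ext with (2 := H). intros x Hx.
    rewrite Rmin_left in Hx by lra. rewrite Rmax_right in Hx by lra.
    symmetry. apply Hf. lra. }
  assert (Hex : ex_RInt f 0 T) by (eexists; exact H').
  exists (ex_RInt_Reals_0 _ _ _ Hex).
  rewrite <- RInt_Reals. rewrite (is_RInt_unique _ _ _ _ H').
  unfold F, minus, plus, opp; simpl. field.
Qed.


Lemma alg2 (al be lh C rho c : R) : 0 < al -> 0 < be -> 0 < C -> 0 < rho -> rho < 1 ->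
  lh = rho * C * (al + be) / be ->
  let lb := lh * be / (al + be) in let b := 1/(al+be) in let ld := C - lb in
  let rr := lb / C in
  let K := b * lb * (al / be * (rr / (1 - rr) - 1) - 1) in
  let r1 := lh + ld - C in
  let P0 := r1*c/be in let PK := r1*c/al in
  let Ra := lb + ld - r1*PK in
  let D := ((lh+ld)*c + ld*(r1*c/lb))*C/Ra in
  let T := K/C in
  0 <= K -> P0 + PK + K*(c + r1*c/lb) = 1 ->
  ld*P0/Ra + D*T + C*PK/Ra = 1 /\
  D*(T^2/2) + C*PK/Ra*T = b * (((2 * (al / be) + 1) * rr - (1 + al / be))
                  * ((2 - be / al) * rr + (be / al - 1)))
             / (2 * rr * (1 - rr)) /\
  D*(T^3/3) + C*PK/Ra*T^2 = b ^ 2 * (((2 * rr - 1) * (al / be) - (1 - rr)) ^ 2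
                       * ((1 - rr) * (2 * be / al) + 2 * rr - 1))
              / (3 * (1 - rr) ^ 2).
Proof.
  intros H1 H2 H3 H4 H5 Hlh. cbv zeta.
  assert (E1 : lh * be / (al + be) = rho * C) by (subst; field; lra).
  rewrite E1. replace (rho * C / C) with rho by (field; lra).
  subst lh. apply (alg al be C rho c); assumption.
Qed.

Lemma dlin (f h : R -> R) (a c x l1 l2 : R) :
  derivable_pt_lim f x l1 -> derivable_pt_lim h x l2 ->
  derivable_pt_lim (fun y => a * f y + c * h y) x (a * l1 + c * l2).
Proof.
  intros. apply (derivable_pt_lim_plus (mult_real_fct a f) (mult_real_fct c h));
  apply derivable_pt_lim_scal; auto.
Qed.

Lemma const_on (f f' : R -> R) (K : R) :
  (forall x, 0 <= x <= K -> derivable_pt_lim f x (f' x)) ->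
  (forall x, 0 <= x <= K -> f' x = 0) -> forall x, 0 <= x <= K -> f x = f 0.
Proof.
  intros Hd H0 x Hx. destruct (Req_dec x 0) as [->|Hne]; [reflexivity|].
  destruct (MVT_cor2 f f' 0 x) as [c [Hc Hc2]]. lra.
  intros c Hc. apply Hd. lra.
  rewrite H0 in Hc by lra. lra.
Qed.

Lemma infinite_sum_ext (u v : nat -> R) (l : R) :
  (forall n, u n = v n) -> infinite_sum u l -> infinite_sum v l.
Proof.
  intros H Hu. apply is_series_Reals. apply is_series_Reals in Hu.
  eapply is_series_ext; [exact H| exact Hu].
Qed.

Theorem theorem2 (al be lh C a : R) (p1 p0 : R -> R) (P0 PK : R) :
  0 < al -> 0 < be -> 0 < lh -> lam_bar al be lh < C -> 0 < a ->
  let b := 1 / (al + be) in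
  let lb := lam_bar al be lh in
  let ld := C - lb in
  let rho := lb / C in
  let K := b * lb * (al / be * (rho / (1 - rho) - 1) - 1) in
  0 <= K ->
  is_stationary al be lh ld C K p1 p0 P0 PK ->
  let Pd := 1 - rho in
  let EDq := b * (((2 * (al / be) + 1) * rho - (1 + al / be))
                  * ((2 - be / al) * rho + (be / al - 1)))
             / (2 * rho * (1 - rho)) in
  let EDq2 := b ^ 2 * (((2 * rho - 1) * (al / be) - (1 - rho)) ^ 2
                       * ((1 - rho) * (2 * be / al) + 2 * rho - 1))
              / (3 * (1 - rho) ^ 2) in
  Dq_expect al be lh ld C K p1 p0 P0 PK (fun t => t) EDq /\
  Dq_expect al be lh ld C K p1 p0 P0 PK (fun t => t ^ 2) EDq2 /\
  exists ED ED2,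
    D_expect al be lh ld C K p1 p0 P0 PK a Pd (fun t => t) ED /\
    D_expect al be lh ld C K p1 p0 P0 PK a Pd (fun t => t ^ 2) ED2 /\
    ED = a * (1 - rho) / rho + EDq /\
    ED2 - ED ^ 2 = a ^ 2 * (1 - rho) / rho ^ 2 + (EDq2 - EDq ^ 2).
Proof.
  intros Hal Hbe Hlh HC Ha b lb ld rho K HK Hst Pd EDq EDq2.
  fold lb in HC.
  assert (Hlb : 0 < lb).
  { unfold lb, lam_bar. apply Rdiv_lt_0_compat; [nra|lra]. }
  assert (HC0 : 0 < C) by lra.
  assert (Hld : 0 < ld) by (unfold ld; lra).
  assert (Hrho1 : 0 < rho) by (unfold rho; apply Rdiv_lt_0_compat; lra).
  assert (Hrho2 : rho < 1).
  { unfold rho. apply Rmult_lt_reg_r with C; [lra|].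
    unfold Rdiv. rewrite Rmult_assoc, Rinv_l; lra. }
  unfold is_stationary in Hst. cbv zeta in Hst.
  destruct Hst as [HP0 [HPK [Hpos [Hder [B1 [B2 [B3 [B4 [I [HI HnI]]]]]]]]]].
  set (r1 := lh + ld - C) in *.
  assert (Hr1e : r1 = lh * al / (al + be)).
  { unfold r1, ld, lb, lam_bar. field. lra. }
  assert (Hr1 : 0 < r1) by (rewrite Hr1e; apply Rdiv_lt_0_compat; nra).
  assert (Hr1b : r1 * be = al * lb).
  { rewrite Hr1e; unfold lb, lam_bar; field; lra. }
  assert (Hr0 : ld - C = - lb) by (unfold ld; ring).
  assert (Hg : forall x, 0 <= x <= K -> r1 * p1 x + (ld - C) * p0 x = r1 * p1 0 + (ld - C) * p0 0).
  { intros x Hx.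
    refine (const_on (fun y => r1 * p1 y + (ld - C) * p0 y) (fun _ => 0) K _ _ x Hx).
    - intros y Hy. destruct (Hder y Hy) as [D1 D2].
      pose proof (dlin _ _ r1 (ld - C) y _ _ D1 D2) as D.
      replace 0 with (r1 * ((- al * p1 y + be * p0 y) / r1) + (ld - C) * ((al * p1 y - be * p0 y) / (ld - C))).
      exact D. field. split; lra.
    - auto. }
  assert (Hp0x : forall x, 0 <= x <= K -> p0 x = r1 * p1 x / lb).
  { intros x Hx. pose proof (Hg x Hx) as G. rewrite Hr0 in G, B2.
    apply (Rmult_eq_reg_l lb); [| lra].
    replace (lb * (r1 * p1 x / lb)) with (r1 * p1 x) by (field; lra). nra. }
  assert (Hp1x : forall x, 0 <= x <= K -> p1 x = p1 0).
  { apply (const_on p1 (fun y => (- al * p1 y + be * p0 y) / r1) K).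
    - intros y Hy. exact (proj1 (Hder y Hy)).
    - intros y Hy. rewrite (Hp0x y Hy).
      replace ((- al * p1 y + be * (r1 * p1 y / lb)) / r1) with (p1 y * (r1 * be - al * lb) / (lb * r1))
        by (field; lra).
      rewrite Hr1b. unfold Rdiv. ring. }
  rewrite (Hp1x K) in B3 by lra.
  set (c := p1 0) in *.
  assert (HP0e : P0 = r1 * c / be) by (apply (Rmult_eq_reg_l be); [rewrite <- B1; field|]; lra).
  assert (HPKe : PK = r1 * c / al) by (apply (Rmult_eq_reg_l al); [rewrite <- B3; field|]; lra).
  assert (HIe : I = c * (1 + r1 / lb) * (1 * K + 0 * (K ^ 2 / 2) + 0 * (K ^ 3 / 3))).
  { apply (integral_is_unique _ _ _ _ _ HI). apply integral_poly. lra.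
    intros t Ht. rewrite (Hp0x t Ht), (Hp1x t Ht). field. lra. }
  assert (Hnorm : r1 * c / be + r1 * c / al + K * (c + r1 * c / lb) = 1).
  { rewrite HIe, HP0e, HPKe in HnI. etransitivity; [|exact HnI]. field. lra. }
  subst P0 PK.
  assert (HT : 0 <= K / C).
  { apply Rmult_le_pos; [lra| left; apply Rinv_0_lt_compat; lra]. }
  set (Ra := R_adm al be lh ld C (r1 * c / al)).
  set (D := ((lh + ld) * c + ld * (r1 * c / lb)) * C / Ra).
  set (T := K / C) in *.
  set (M0 := ld * (r1 * c / be) / Ra + D * T + C * (r1 * c / al) / Ra).
  set (M1 := D * (T ^ 2 / 2) + C * (r1 * c / al) / Ra * T).
  set (M2 := D * (T ^ 3 / 3) + C * (r1 * c / al) / Ra * T ^ 2).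
  assert (HDq : forall h u v w, (forall t, h t = u + v * t + w * t ^ 2) ->
     Dq_expect al be lh ld C K p1 p0 (r1 * c / be) (r1 * c / al) h (u * M0 + v * M1 + w * M2)).
  { intros h u v w Hh. unfold Dq_expect. cbv zeta. fold Ra.
    exists (D * (u * T + v * (T ^ 2 / 2) + w * (T ^ 3 / 3))). split.
    - apply integral_poly. exact HT.
      intros t Ht.
      assert (HtC : 0 <= t * C <= K).
      { split. nra.
        assert (t * C <= T * C) by (apply Rmult_le_compat_r; lra).
        replace (T * C) with K in H by (unfold T; field; lra). lra. }
      rewrite Hh, (Hp0x _ HtC), (Hp1x _ HtC). unfold D. ring.
    - rewrite !Hh. unfold M0, M1, M2, T. ring. }
  assert (Hlhe : lh = rho * C * (al + be) / be).
  { unfold rho, lb, lam_bar. field. lra. }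
  pose proof (alg2 al be lh C rho c Hal Hbe HC0 Hrho1 Hrho2 Hlhe HK Hnorm) as [A0 [A1 A2]].
  change (M0 = 1) in A0. change (M1 = EDq) in A1. change (M2 = EDq2) in A2.
  assert (HPd : 0 < Pd < 1) by (unfold Pd; lra).
  split; [|split].
  - replace EDq with (0 * M0 + 1 * M1 + 0 * M2) by (rewrite A1; ring).
    apply HDq. intros; ring.
  - replace EDq2 with (0 * M0 + 0 * M1 + 1 * M2) by (rewrite A2; ring).
    apply HDq. intros; ring.
  - exists (EDq + a * (Pd / (1 - Pd)) + 0 * (Pd * (1 + Pd) / (1 - Pd) ^ 2)).
    exists (EDq2 + 2 * a * EDq * (Pd / (1 - Pd)) + a ^ 2 * (Pd * (1 + Pd) / (1 - Pd) ^ 2)).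
    split; [|split; [|split]].
    + exists (fun g => a * INR g + EDq). split.
      * intros g. replace (a * INR g + EDq) with (a * INR g * M0 + 1 * M1 + 0 * M2) by (rewrite A0, A1; ring).
        apply HDq. intros; ring.
      * eapply infinite_sum_ext; [| exact (geom_moments Pd EDq a 0 HPd)].
        intros n. unfold geom_pmf. ring.
    + exists (fun g => a ^ 2 * INR g ^ 2 + 2 * a * INR g * EDq + EDq2). split.
      * intros g. replace (a ^ 2 * INR g ^ 2 + 2 * a * INR g * EDq + EDq2)
          with (a ^ 2 * INR g ^ 2 * M0 + 2 * a * INR g * M1 + 1 * M2) by (rewrite A0, A1, A2; ring).
        apply HDq. intros; ring.
      * eapply infinite_sum_ext; [| exact (geom_moments Pd EDq2 (2 * a * EDq) (a ^ 2) HPd)].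
        intros n. unfold geom_pmf. ring.
    + unfold Pd. field. lra.
    + unfold Pd. field. lra.
Qed.
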